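(* Consider the decoupled system \[ \begin{aligned} \frac{dS}{dt}&= B-\beta S(t)\int_{t_0}^{h_1} f_{T_1}(s)e^{-\mu_v s}G(I(t-s))\,ds-\mu S(t)+\alpha\int_{t_0}^{\infty} f_{T_3}(r)I(t-r)e^{-\mu r}\,dr,\\ \frac{dI}{dt}&= \beta\int_{t_0}^{h_2} f_{T_2}(u)S(t-u)\int_{t_0}^{h_1} f_{T_1}(s)e^{-\mu_v s-\mu u}G(I(t-s-u))\,ds\,du-(\mu+d+\alpha)I(t), \end{aligned} \] (the $S$ and $I$ equations of the full SEIRS system with additionally $E'=\beta S\int f_{T_1}(s)e^{-\mu_v s}G(I(t-s))ds-\mu E-\beta\int\!\!\int f_{T_2}(u)f_{T_1}(s)S(t-u)e^{-\mu_v s-\mu u}G(I(t-s-u))dsdu$ and $R'=\alpha I-\mu R-\alpha\int f_{T_3}(r)I(t-r)e^{-\mu r}dr$), with initial data $\varphi_k\in UC_g$, $\varphi_k(t_0)>0$, and with solutions considered in $D^{expl}(\infty)=\{Y\in\mathbb{R}^4_+:\ \frac{B}{\mu+d}\le S+E+I+R\le\frac{B}{\mu}\}$. Let $R_0^*=\frac{\beta}{\mu+d+\alpha}$ and $E(e^{-(\mu_vT_1+\mu T_2)})=\int_{t_0}^{h_2}\int_{t_0}^{h_1}e^{-\mu_v s-\mu u}f_{T_2}(u)f_{T_1}(s)\,ds\,du$, and suppose that either (1) $R_0^*\ge1$ and $E(e^{-(\mu_vT_1+\mu T_2)})<\frac{1}{R_0^*}$, or (2) $R_0^*<1$ (so that,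 in addition, $\lim_{t\to\infty}\frac1t\int_{t_0}^tS(\xi)d\xi=B/\mu$ holds). Then in $D^{expl}(\infty)$ the disease-free equilibrium $E_0=(S_0^*,0)=(B/\mu,0)=(1,0)$ is stable in the sense of Lyapunov.
   Context: Constants: $t_0\ge0$, $h_1,h_2>0$, $B,\beta,\mu,\mu_v,\alpha>0$, $d\ge0$, with $B/\mu=1$. $T_1,T_2,T_3$ are random delays with probability densities $f_{T_1}$ on $[t_0,h_1]$, $f_{T_2}$ on $[t_0,h_2]$, $f_{T_3}$ on $[t_0,\infty)$. $G:[0,\infty)\to[0,\infty)$ satisfies: (A1) $G(0)=0$; (A2) strictly monotonic; (A3) $G\in C^2$, $G''<0$; (A4) $\lim_{I\to\infty}G(I)=C\in[0,\infty)$; (A5) $G(I)\le I$ for $I>0$; (A6) $\left(\frac{G(x)}{x}-\frac{G(y)}{y}\right)(G(x)-G(y))\le0$ for $x,y\ge0$. $UC_g$ is the space of continuous $\varphi:(-\infty,t_0]\to\mathbb{R}_+$ with $\sup_{t\le t_0}|\varphi(t)|/g(t)<\infty$ and $|\varphi|/g$ uniformly continuous, for a continuous non-increasing $g\ge1$ with $g(t_0)=1$, $\lim_{u\to t_0^-}g(t+u)/g(t)=1$ uniformly in $t\ge t_0$, $\lim_{t\to-\infty}g(t)=\infty$. *)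

(* Defs.v *)
From mathcomp Require Import all_boot all_order all_algebra.
From mathcomp Require Import all_classical all_reals all_analysis.
Set Implicit Arguments. Unset Strict Implicit. Unset Printing Implicit Defensive.
Import Order.TTheory GRing.Theory Num.Theory.
Import numFieldNormedType.Exports.
Local Open Scope classical_set_scope.
Local Open Scope ring_scope.

Section Defs.
Variable R : realType.

Definition seirs_Lint (A : set R) (f : R -> R) : R :=
  \int[(@lebesgue_measure R)]_(x in A) f x.

Definition seirs_is_density (A : set R) (f : R -> R) : Prop :=
  measurable_fun A f /\ (forall x, A x -> 0 <= f x) /\
  (\int[(@lebesgue_measure R)]_(x in A) (f x)%:E = 1)%E.

Definition seirs_admissible_g (t0 : R) (g : R -> R) : Prop :=
  {within `]-oo, t0], continuous g} /\
  {in `]-oo, t0] &, forall x y, x <= y -> g y <= g x} /\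
  (forall t, t <= t0 -> 1 <= g t) /\
  g t0 = 1 /\
  (forall e, 0 < e -> exists del, 0 < del /\
     forall u, t0 - del < u -> u < t0 ->
       forall t, t0 <= t -> `| g (t + u) / g t - 1 | < e) /\
  g @ -oo --> +oo.

(** phi belongs to UC_g (phi : (-oo, t0] -> R_+, represented on R). *)
Definition seirs_UCg (t0 : R) (g : R -> R) (phi : R -> R) : Prop :=
  {within `]-oo, t0], continuous phi} /\
  (forall t, t <= t0 -> 0 <= phi t) /\
  (exists M, forall t, t <= t0 -> `| phi t | / g t <= M) /\
  (forall e, 0 < e -> exists del, 0 < del /\
     forall x y, x <= t0 -> y <= t0 -> `| x - y | < del ->
       `| `| phi x | / g x - `| phi y | / g y | < e).

Definition seirs_gnorm (t0 : R) (g : R -> R) (phi : R -> R) : R :=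
  sup [set `| phi t | / g t | t in `]-oo, t0]].

Definition seirs_G_assumptions (G : R -> R) : Prop :=
  (forall x, 0 <= x -> 0 <= G x) /\
  G 0 = 0 /\
  ({in `[0, +oo[ &, forall x y, x < y -> G x < G y} \/
            {in `[0, +oo[ &, forall x y, x < y -> G y < G x}) /\
  ({within `[0, +oo[, continuous G} /\
            (forall x, 0 < x -> derivable G x 1 /\ derivable (derive1 G) x 1) /\
            {in `]0, +oo[, continuous (derive1n 2 G)} /\
            (forall x, 0 < x -> derive1n 2 G x < 0)) /\
  (exists C : R, 0 <= C /\ G @ +oo --> C) /\
  (forall x, 0 < x -> G x <= x) /\
  (forall x y, 0 < x -> 0 < y -> (G x / x - G y / y) * (G x - G y) <= 0).

Definition seirs_force_S (t0 h1 muv : R) (f1 G I : R -> R) (t : R) : R :=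
  seirs_Lint `[t0, h1] (fun s => f1 s * expR (- (muv * s)) * G (I (t - s))).

Definition seirs_force_I (t0 h1 h2 mu muv : R) (f1 f2 G S I : R -> R) (t : R) : R :=
  seirs_Lint `[t0, h2] (fun u => f2 u * S (t - u) *
    seirs_Lint `[t0, h1] (fun s => f1 s * expR (- (muv * s) - mu * u) * G (I (t - s - u)))).

Definition seirs_recov_term (t0 mu : R) (f3 I : R -> R) (t : R) : R :=
  seirs_Lint `[t0, +oo[ (fun r => f3 r * I (t - r) * expR (- (mu * r))).

Definition seirs_is_solution (t0 h1 h2 B beta mu muv alpha d : R)
  (g f1 f2 f3 G S E I Rv : R -> R) : Prop :=
  continuous S /\ continuous E /\ continuous I /\ continuous Rv /\
  seirs_UCg t0 g S /\ seirs_UCg t0 g E /\ seirs_UCg t0 g I /\ seirs_UCg t0 g Rv /\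
  0 < S t0 /\ 0 < E t0 /\ 0 < I t0 /\ 0 < Rv t0 /\
  (forall t, t0 <= t ->
     (@lebesgue_measure R).-integrable `[t0, +oo[
        (fun r => (f3 r * I (t - r) * expR (- (mu * r)))%:E)) /\
  (forall t, t0 < t ->
     is_derive t 1 S (B - beta * S t * seirs_force_S t0 h1 muv f1 G I t - mu * S t
                        + alpha * seirs_recov_term t0 mu f3 I t) /\
     is_derive t 1 E (beta * S t * seirs_force_S t0 h1 muv f1 G I t - mu * E t
                        - beta * seirs_force_I t0 h1 h2 mu muv f1 f2 G S I t) /\
     is_derive t 1 I (beta * seirs_force_I t0 h1 h2 mu muv f1 f2 G S I t
                        - (mu + d + alpha) * I t) /\
     is_derive t 1 Rv (alpha * I t - mu * Rv t - alpha * seirs_recov_term t0 mu f3 I t)) /\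
  (forall t, t0 <= t ->
     0 <= S t /\ 0 <= E t /\ 0 <= I t /\ 0 <= Rv t /\
     B / (mu + d) <= S t + E t + I t + Rv t /\ S t + E t + I t + Rv t <= B / mu).

Definition seirs_Eexp (t0 h1 h2 mu muv : R) (f1 f2 : R -> R) : R :=
  seirs_Lint `[t0, h2] (fun u => seirs_Lint `[t0, h1]
    (fun s => expR (- (muv * s) - mu * u) * f2 u * f1 s)).

End Defs.

(* Main.v *)
Require Import Defs.
From mathcomp Require Import all_boot all_order all_algebra.
From mathcomp Require Import all_classical all_reals all_analysis.
Import Order.TTheory GRing.Theory Num.Theory.
Import numFieldNormedType.Exports.
Local Open Scope classical_set_scope.
Local Open Scope ring_scope.
From mathcomp Require Import lra ring measurable_realfun.

Set Implicit Arguments.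
Section S. Variable R : realType.
Lemma deriv_left_ge0 (f : R -> R) (s a l : R) : a < s -> is_derive s 1 f l ->
  (forall y, a <= y -> y < s -> f y < f s) -> 0 <= l.
Proof.
move=> as_ [dv dval] hf.
rewrite leNgt; apply/negP => l0.
have cv : (fun h : R => h^-1 *: ((f \o shift s) (h *: 1) - f s)) @ 0^' --> l.
  by rewrite -dval; exact: dv.
have H : \forall h \near 0^', h^-1 *: ((f \o shift s) (h *: 1) - f s) < 0.
  exact: (cvgr_lt l cv 0 l0).
move: H; rewrite /= near_withinE => /nbhs_ballP [e /= e0 He].
pose h := - (Num.min e (s - a)) / 2.
have mpos : 0 < Num.min e (s - a) by rewrite lt_min e0 subr_gt0.
have hneg : h < 0 by rewrite /h mulNr oppr_lt0 divr_gt0.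
have hb : ball 0 e h.
  rewrite /ball /= sub0r normrN ltr0_norm // /h mulNr opprK.
  apply: (le_lt_trans _ (_ : e / 2 < e)); last by rewrite ltr_pdivrMr // ltr_pMr // ltr1n.
  by rewrite ler_pM2r // ge_min lexx.
have := He h hb (ltr0_neq0 hneg).
rewrite /= scaler1 [h + s]addrC.
have fl : f (s + h) < f s.
  apply: hf; last by rewrite -ltrBrDl subrr.
  have : Num.min e (s - a) / 2 <= s - a.
    apply: (le_trans (y := Num.min e (s - a))); last by rewrite ge_min lexx orbT.
    by rewrite ler_pdivrMr // ler_pMr // ler1n.
  rewrite /h; lra.
rewrite ltNge => /negP; apply.
by rewrite mulr_le0 // ?invr_le0 ?(ltW hneg) // subr_le0 ltW.
Qed.
End S.
Section S. Variable R : realType.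
Lemma first_cross (f : R -> R) (a x A : R) : continuous f -> f a < A -> a <= x -> A <= f x ->
  exists s, [/\ a < s, s <= x, f s = A & forall y, a <= y -> y < s -> f y < A].
Proof.
move=> cf fa ax Ax.
pose E := [set t | a <= t /\ t <= x /\ A <= f t].
have En : nonempty E by exists x; split => //; split.
have El : has_lbound E by exists a => t [].
have lb : lbound E (inf E) := ge_inf El.
have as_ : a <= inf E by apply: lb_le_inf => // t [].
have sx : inf E <= x by apply: lb; split => //; split.
set s := inf E in lb as_ sx *.
have fsA : A <= f s.
  rewrite leNgt; apply/negP => fsl.
  have H : \forall y \near s, f y < A by exact: (cvgr_lt (f s) (cf s) A fsl).
  move: H => /nbhs_ballP [e /= e0 He].
  have [y Ey ys] := inf_adherent e0 (conj En El).
  have sy : s <= y := lb y Ey.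
  have : f y < A.
    apply: He; rewrite /ball /= ler0_norm ?subr_le0 //; lra.
  by case: Ey => _ [_ ]; rewrite leNgt => /negP.
have as2 : a < s.
  rewrite lt_neqAle as_ andbT; apply/negP => /eqP e.
  by move: fsA; rewrite -e leNgt fa.
have below : forall y, a <= y -> y < s -> f y < A.
  move=> y ay ys; rewrite ltNge; apply/negP => Ay.
  have : s <= y by apply: lb; split => //; split => //; lra.
  lra.
exists s; split => //.
apply/eqP; rewrite eq_le fsA andbT leNgt; apply/negP => fsl.
have H : \forall y \near s, A < f y by exact: (cvgr_gt (f s) (cf s) A fsl).
move: H => /nbhs_ballP [e /= e0 He].
pose m := Num.min e (s - a).
have m0 : 0 < m by rewrite lt_min e0 subr_gt0.
have me : m <= e by rewrite ge_min lexx.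
have ms : m <= s - a by rewrite ge_min lexx orbT.
have : A < f (s - m / 2).
  apply: He; rewrite /ball /= opprB addrC subrK ger0_norm; lra.
have : f (s - m / 2) < A by apply: below; lra.
lra.
Qed.
End S.
Section S. Variable R : realType.
Local Notation mu := (@lebesgue_measure R).

Lemma ge0_int_mono (D : set R) (h1 h2 : R -> R) :
  (forall x, D x -> 0 <= h1 x <= h2 x) ->
  (\int[mu]_(x in D) (h1 x)%:E <= \int[mu]_(x in D) (h2 x)%:E)%E.
Proof.
move=> H.
have h10 : forall x, D x -> (0 <= (h1 x)%:E)%E.
  by move=> x Dx; rewrite lee_fin; case/andP: (H x Dx).
have h20 : forall x, D x -> (0 <= (h2 x)%:E)%E.
  by move=> x Dx; rewrite lee_fin; case/andP: (H x Dx) => a b; apply: le_trans b.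
rewrite ge0_integralE // ge0_integralE //.
apply: ereal_sup_le => _ [h /= hh <-]; exists h => //= x.
apply: (le_trans (hh x)); apply: lee_restrict => y Dy.
by rewrite lee_fin; case/andP: (H y Dy).
Qed.

Lemma Lint_mono (D : set R) (h1 h2 : R -> R) :
  (forall x, D x -> 0 <= h1 x <= h2 x) ->
  (\int[mu]_(x in D) (h2 x)%:E < +oo)%E ->
  seirs_Lint D h1 <= seirs_Lint D h2.
Proof.
move=> H fin.
have h10 : forall x, D x -> (0 <= (h1 x)%:E)%E.
  by move=> x Dx; rewrite lee_fin; case/andP: (H x Dx).
have le := @ge0_int_mono D h1 h2 H.
have i1 := integral_ge0 mu h10.
rewrite /seirs_Lint /Rintegral fine_le //.
- by rewrite ge0_fin_numE // (le_lt_trans le fin).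
- by rewrite ge0_fin_numE // (le_trans i1 le).
Qed.

Lemma Lint_ge0 (D : set R) (h : R -> R) : (forall x, D x -> 0 <= h x) ->
  0 <= seirs_Lint D h.
Proof. by move=> H; apply: Rintegral_ge0. Qed.

Lemma Lint_scale (D : set R) (h : R -> R) (C : R) : measurable D ->
  measurable_fun D h -> (forall x, D x -> 0 <= h x) -> 0 <= C ->
  seirs_Lint D (fun x => C * h x) = C * seirs_Lint D h.
Proof.
move=> mD mh h0 C0.
rewrite /seirs_Lint /Rintegral.
under eq_integral do rewrite EFinM.
have hE0 : forall x, D x -> (0 <= (h x)%:E)%E by move=> x Dx; rewrite lee_fin h0.
have mhE : measurable_fun D (fun x => (h x)%:E) by exact/measurable_EFinP.
rewrite ge0_integralZl_EFin //.
have i0 := integral_ge0 mu hE0.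
move: i0; case: (integral _ _ _) => [r| |] //= _.
have [->|Cn] := eqVneq C 0; first by rewrite mul0e /= mul0r.
have Cp : 0 < C by rewrite lt_neqAle eq_sym Cn C0.
by rewrite gt0_muley ?lte_fin // mulr0.
Qed.

Lemma int_fin_dens (D : set R) (f h : R -> R) (C : R) : measurable D ->
  seirs_is_density D f -> 0 <= C ->
  (forall x, D x -> 0 <= h x <= C * f x) ->
  (\int[mu]_(x in D) (h x)%:E < +oo)%E.
Proof.
move=> mD [mf [f0 f1]] C0 H.
have E : (\int[mu]_(x in D) ((C * f x)%:E) = C%:E)%E.
  under eq_integral do rewrite EFinM.
  have fE0 : forall x, D x -> (0 <= (f x)%:E)%E by move=> x Dx; rewrite lee_fin f0.
  have mfE : measurable_fun D (fun x => (f x)%:E) by exact/measurable_EFinP.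
  rewrite ge0_integralZl_EFin //.
  by rewrite f1 mule1.
apply: le_lt_trans (_ : (\int[mu]_(x in D) ((C * f x)%:E) < +oo)%E); last by rewrite E ltry.
by apply: ge0_int_mono.
Qed.

Lemma Lint_dens_le (D : set R) (f h : R -> R) (C : R) : measurable D ->
  seirs_is_density D f -> 0 <= C ->
  (forall x, D x -> 0 <= h x <= C * f x) -> seirs_Lint D h <= C.
Proof.
move=> mD [mf [f0 f1]] C0 H.
have E : (\int[mu]_(x in D) ((C * f x)%:E) = C%:E)%E.
  under eq_integral do rewrite EFinM.
  have fE0 : forall x, D x -> (0 <= (f x)%:E)%E by move=> x Dx; rewrite lee_fin f0.
  have mfE : measurable_fun D (fun x => (f x)%:E) by exact/measurable_EFinP.
  rewrite ge0_integralZl_EFin //.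
  by rewrite f1 mule1.
have -> : C = seirs_Lint D (fun x => C * f x) by rewrite /seirs_Lint /Rintegral E.
by apply: Lint_mono => //; rewrite E ltry.
Qed.
End S.
Section S. Variable R : realType.
Lemma gnorm_ub (t0 : R) (g phi : R -> R) (M : R) :
  (forall t, t <= t0 -> `|phi t| / g t <= M) ->
  forall t, t <= t0 -> `|phi t| / g t <= seirs_gnorm t0 g phi.
Proof.
move=> HM t tt0; apply: ub_le_sup.
  by exists M => _ [s /= + <-]; rewrite in_itv /= => /HM.
by exists t => //=; rewrite in_itv /=.
Qed.

Lemma gnorm_bound (t0 : R) (g phi : R -> R) (M : R) :
  (forall t, t <= t0 -> 1 <= g t) ->
  (forall t, t <= t0 -> `|phi t| / g t <= M) ->
  forall t, t <= t0 -> `|phi t| <= seirs_gnorm t0 g phi * g t.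
Proof.
move=> g1 HM t tt0.
have gp : 0 < g t by apply: lt_le_trans (g1 t tt0).
by rewrite -ler_pdivrMr // (@gnorm_ub t0 g phi M HM t tt0).
Qed.

Lemma gnorm_ge0 (t0 : R) (g phi : R -> R) (M : R) :
  (forall t, t <= t0 -> 1 <= g t) ->
  (forall t, t <= t0 -> `|phi t| / g t <= M) ->
  0 <= seirs_gnorm t0 g phi.
Proof.
move=> g1 HM; apply: le_trans (@gnorm_ub t0 g phi M HM t0 (lexx t0)).
by rewrite divr_ge0 // (le_trans _ (g1 t0 (lexx t0))).
Qed.
End S.
Section S. Variable R : realType.
Local Notation mu := (@lebesgue_measure R).
Lemma meas_fexp (D : set R) (f : R -> R) (a : R) : measurable D ->
  measurable_fun D f -> measurable_fun D (fun x => f x * expR (- (a * x))).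
Proof.
move=> mD mf; apply: measurable_funM => //.
apply: measurable_funTS; apply: continuous_measurable_fun => x.
apply: continuous_comp; last exact: continuous_expR.
by apply: cvgN; apply: cvgMr; exact: cvg_id.
Qed.
Lemma memitv (a b x : R) : (`[a, b]%classic : set R) x -> a <= x /\ x <= b.
Proof. by rewrite /= in_itv /= => /andP. Qed.
Lemma memitvy (a x : R) : (`[a, +oo[%classic : set R) x -> a <= x.
Proof. by rewrite /= in_itv /= andbT. Qed.
End S.
Unset Implicit Arguments.
Arguments Lint_dens_le {R D f h C}.
Arguments Lint_scale {R D h C}.
Arguments Lint_mono {R D h1 h2}.
Arguments int_fin_dens {R D f h C}.
Arguments first_cross {R f a x A}.
Arguments deriv_left_ge0 {R f s a l}.
Arguments gnorm_bound {R t0 g phi M}.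
Arguments gnorm_ge0 {R t0 g phi M}.
Arguments gnorm_ub {R t0 g phi M}.
Arguments memitv {R a b x}.
Arguments memitvy {R a x}.
Arguments meas_fexp {R D f a}.
Arguments Lint_ge0 {R D h}.
Arguments ge0_int_mono {R D h1 h2}.
Section Ar. Variable R : realType.
Lemma e1' (a x t0 : R) : 0 < a -> 0 <= t0 -> t0 <= x -> expR (- (a * x)) <= 1.
Proof. move=> a0 t00 tx; rewrite expR_le1 oppr_le0; apply: mulr_ge0; lra. Qed.
Lemma ar_win3 (t0 h1 h2 s z u : R) : t0 < s -> 0 <= t0 -> t0 <= z -> z <= h1 ->
  t0 <= u -> u <= h2 -> t0 - h1 - h2 <= s - z - u /\ s - z - u <= s.
Proof. move=> *; split; lra. Qed.
Lemma ar_win2 (t0 h1 h2 s u : R) : t0 < s -> 0 < h1 -> u <= h2 -> t0 - h1 - h2 <= s - u.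
Proof. move=> *; lra. Qed.
Lemma ar_win1 (t0 h1 h2 s z : R) : t0 < s -> 0 < h2 -> z <= h1 -> t0 - h1 - h2 <= s - z.
Proof. move=> *; lra. Qed.
Lemma ar_le1A (x A : R) : x <= 1 -> 0 < A -> x <= 1 + A.
Proof. move=> *; lra. Qed.
Lemma ar_sum (s e i r : R) : 0 <= e -> 0 <= i -> 0 <= r -> s + e + i + r <= 1 -> s <= 1.
Proof. move=> *; lra. Qed.
Lemma ar_splitl (a b c : R) : 0 <= b -> a + b < c -> a < c.
Proof. move=> *; lra. Qed.
Lemma ar_splitr (a b c : R) : 0 <= a -> a + b < c -> b < c.
Proof. move=> *; lra. Qed.
Lemma ar_a (x y A : R) : x - 1 <= y -> y < A -> x < 1 + A.
Proof. move=> *; lra. Qed.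
Lemma ar_b (x g a A eta : R) : - g <= x - 1 -> g < a -> a <= A -> A <= eta -> 1 - eta < x.
Proof. move=> *; lra. Qed.
Lemma ar_c (x g a A : R) : x <= g -> g < a -> a <= A -> x < A.
Proof. move=> *; lra. Qed.
Lemma ar_I (k A c X : R) : 0 <= k -> 0 < A -> A * (2 * (k + 1)) <= c - k ->
  X <= k * (1 + A) * A -> 0 <= X - c * A -> False.
Proof.
move=> k0 A0 HA HX H.
have kA : k * A <= A * (k + 1) by nra.
have hk : k * (1 + A) < c by nra.
nra.
Qed.
Lemma ar_S (mu eta beta A X Y : R) : X <= beta * A -> 0 <= Y ->
  A * (2 * beta) <= mu * eta -> 0 < mu * eta -> 0 < A -> 0 < beta ->
  0 <= - (mu - X - mu * (1 - eta) + Y) -> False.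
Proof. move=> *; nra. Qed.
Lemma ar_fin (s i eta A eps : R) : 1 - eta < s -> i < A -> eta <= eps / 2 -> A <= eps / 4 ->
  0 < eps -> 1 - s + i < eps.
Proof. move=> *; lra. Qed.
Lemma ar_d (eta : R) : 0 < eta -> 1 - eta <= 1.
Proof. move=> *; lra. Qed.
End Ar.
Arguments e1' {R a x t0}.
Arguments ar_win3 {R t0 h1 h2 s z u}.
Arguments ar_win2 {R t0 h1 h2 s u}.
Arguments ar_win1 {R t0 h1 h2 s z}.
Arguments ar_le1A {R x A}.
Arguments ar_sum {R s e i r}.
Arguments ar_splitl {R a b c}.
Arguments ar_splitr {R a b c}.
Arguments ar_a {R x y A}.
Arguments ar_b {R x g a A eta}.
Arguments ar_c {R x g a A}.
Arguments ar_I {R k A c X}.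
Arguments ar_S {R mu eta beta A X Y}.
Arguments ar_fin {R s i eta A eps}.
Arguments ar_d {R eta}.
Theorem theorem6 (R : realType) (t0 h1 h2 B beta mu muv alpha d : R)
  (g f1 f2 f3 G : R -> R) :
  0 <= t0 -> 0 < h1 -> 0 < h2 -> 0 < B -> 0 < beta -> 0 < mu -> 0 < muv ->
  0 < alpha -> 0 <= d -> B / mu = 1 ->
  seirs_is_density `[t0, h1] f1 -> seirs_is_density `[t0, h2] f2 -> seirs_is_density `[t0, +oo[ f3 ->
  seirs_G_assumptions G -> seirs_admissible_g t0 g ->
  let R0 := beta / (mu + d + alpha) in
  (1 <= R0 /\ seirs_Eexp t0 h1 h2 mu muv f1 f2 < 1 / R0) \/ R0 < 1 ->
  forall eps : R, 0 < eps -> exists del : R, 0 < del /\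
    forall S E I Rv : R -> R,
      seirs_is_solution t0 h1 h2 B beta mu muv alpha d g f1 f2 f3 G S E I Rv ->
      (R0 < 1 ->
         (fun t => t^-1 * seirs_Lint `[t0, t] S) @ +oo --> B / mu) ->
      seirs_gnorm t0 g (fun t => S t - 1) + seirs_gnorm t0 g I < del ->
      forall t, t0 <= t -> `| S t - 1 | + `| I t | < eps.
Proof.
move=> t00 h10 h20 B0 beta0 mu0 muv0 al0 d0 Bmu dens1 dens2 dens3 HG Hg R0 Hcase eps eps0.
have Bm : B = mu.
  have : B / mu * mu = mu by rewrite Bmu mul1r.
  by rewrite divfK // gt_eqF.
have mD1 : measurable (`[t0, h1]%classic : set R) by exact: measurable_itv.
have mD2 : measurable (`[t0, h2]%classic : set R) by exact: measurable_itv.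
have [mf1 [f1p _]] := dens1.
have [mf2 [f2p _]] := dens2.
have [_ [f3p _]] := dens3.
have [G0 [GO [_ [_ [_ [G5 _]]]]]] := HG.
have Gle : forall x, 0 <= x -> 0 <= G x <= x.
  move=> x x0; rewrite G0 //=.
  have [->|xn] := eqVneq x 0; first by rewrite GO.
  by apply: G5; rewrite lt_neqAle eq_sym xn x0.
have [_ [gmono [g1 [gt0eq _]]]] := Hg.
pose Gm := g (t0 - h1 - h2).
have Gm1 : 1 <= Gm by apply: g1; lra.
have Gm0 : 0 < Gm by lra.
have gwin : forall x, t0 - h1 - h2 <= x -> x <= t0 -> g x <= Gm.
  move=> x xl xu; apply: gmono; rewrite ?in_itv /= ?xu //; lra.
pose K := seirs_Lint `[t0, h1] (fun s => f1 s * expR (- (muv * s))).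
pose J := seirs_Lint `[t0, h2] (fun u => f2 u * expR (- (mu * u))).
have e1 : forall a x : R, 0 <= a -> 0 <= x -> expR (- (a * x)) <= 1.
  by move=> a x a0 x0; rewrite expR_le1 oppr_le0 mulr_ge0.
have K0 : 0 <= K.
  by apply: Lint_ge0 => x Dx; rewrite mulr_ge0 ?expR_ge0 ?f1p.
have J0 : 0 <= J.
  by apply: Lint_ge0 => x Dx; rewrite mulr_ge0 ?expR_ge0 ?f2p.
have K1 : K <= 1.
  rewrite /K; apply: (Lint_dens_le mD1 dens1) => // x Dx; have [tx _] := memitv Dx.
  rewrite mulr_ge0 ?expR_ge0 ?f1p //= mul1r ler_piMr ?f1p //.
  exact: e1' muv0 t00 tx.
have J1 : J <= 1.
  rewrite /J; apply: (Lint_dens_le mD2 dens2) => // x Dx; have [tx _] := memitv Dx.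
  rewrite mulr_ge0 ?expR_ge0 ?f2p //= mul1r ler_piMr ?f2p //.
  exact: e1' mu0 t00 tx.
have EE : seirs_Eexp t0 h1 h2 mu muv f1 f2 = K * J.
  rewrite /seirs_Eexp.
  transitivity (seirs_Lint `[t0, h2] (fun u => K * (f2 u * expR (- (mu * u))))).
    rewrite /seirs_Lint; apply: eq_Rintegral => u; rewrite inE => Du.
    rewrite [RHS]mulrC /K -Lint_scale //; last 3 first.
    - exact: meas_fexp.
    - by move=> x Dx; rewrite mulr_ge0 ?expR_ge0 ?f1p.
    - by rewrite mulr_ge0 ?expR_ge0 ?f2p.
    rewrite /seirs_Lint; apply: eq_Rintegral => x _.
    rewrite expRD; ring.
  rewrite Lint_scale //; last by move=> x Dx; rewrite mulr_ge0 ?expR_ge0 ?f2p.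
  exact: meas_fexp.
pose c := mu + d + alpha.
have c0 : 0 < c by rewrite /c; lra.
pose k := beta * (K * J).
have k0 : 0 <= k by rewrite /k !mulr_ge0 // ltW.
have kc : k < c.
  case: Hcase => [[_ Elt]|R01].
    move: Elt; rewrite EE /R0 div1r invf_div ltr_pdivlMr // => H.
    by rewrite /k mulrC.
  move: R01; rewrite /R0 ltr_pdivrMr // mul1r => H.
  have KJ1 : K * J <= 1 by rewrite -[1]mulr1 ler_pM.
  rewrite /k; apply: le_lt_trans H.
  by rewrite ler_piMr // ltW.
pose eta := Num.min eps 1 / 2.
have eta0 : 0 < eta by rewrite /eta divr_gt0 // lt_min eps0 ltr01.
have etae : eta <= eps / 2 by rewrite /eta ler_pM2r ?invr_gt0 ?lt_min ?eps0 ?ltr01 // ge_min lexx.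
have eta1 : eta <= 1 / 2 by rewrite /eta ler_pM2r ?invr_gt0 ?lt_min ?eps0 ?ltr01 // ge_min lexx orbT.
pose A := Num.min (Num.min ((c - k) / (2 * (k + 1))) (mu * eta / (2 * beta)))
                  (Num.min (eps / 4) eta).
have q1 : 0 < (c - k) / (2 * (k + 1)) by apply: divr_gt0; lra.
have q2 : 0 < mu * eta / (2 * beta) by apply: divr_gt0; [apply: mulr_gt0|]; lra.
have q3 : 0 < eps / 4 by apply: divr_gt0; lra.
have A0 : 0 < A by rewrite /A !lt_min q1 q2 q3 eta0.
have A1 : A * (2 * (k + 1)) <= c - k.
  have p : 0 < 2 * (k + 1) by lra.
  have e : (c - k) / (2 * (k + 1)) * (2 * (k + 1)) = c - k by rewrite divfK // gt_eqF.
  by rewrite -[X in _ <= X]e ler_pM2r // /A !ge_min lexx.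
have A2 : A * (2 * beta) <= mu * eta.
  have p : 0 < 2 * beta by lra.
  have e : mu * eta / (2 * beta) * (2 * beta) = mu * eta by rewrite divfK // gt_eqF.
  by rewrite -[X in _ <= X]e ler_pM2r // /A !ge_min lexx orbT.
have A3 : A <= eps / 4 by rewrite /A !ge_min lexx !orbT.
have A4 : A <= eta by rewrite /A !ge_min lexx !orbT.
exists (A / Gm); split; first by rewrite divr_gt0.
have AGA : A / Gm <= A by rewrite ler_pdivrMr // ler_peMr // ltW.
have Kdef : K = seirs_Lint `[t0, h1] (fun s => f1 s * expR (- (muv * s))) by [].
have kdef : k = beta * (K * J) by [].
have Jdef : J = seirs_Lint `[t0, h2] (fun u => f2 u * expR (- (mu * u))) by [].
have cdef : c = mu + d + alpha by [].
clearbody K J k c eta A Gm R0.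
move=> S E I Rv sol _ hnorm t tt0.
move: sol => [cS [cE [cI [cR [ucS [ucE [ucI [ucR [S0p [E0p [I0p [R0p [recint [Hder Hbox]]]]]]]]]]]]]].
move: ucS => [_ [Shist [[MS HMS] _]]].
move: ucI => [_ [Ihist [[MI HMI] _]]].
have HMS' : forall t, t <= t0 -> `|S t - 1| / g t <= MS + 1.
  move=> x xt; have gp : 0 < g x by apply: lt_le_trans (g1 x xt).
  apply: le_trans (_ : (`|S x| + 1) / g x <= _).
    by rewrite ler_pM2r ?invr_gt0 // (le_trans (ler_normB _ _)) // normr1.
  rewrite mulrDl lerD ?HMS //.
  by rewrite ler_pdivrMr // mul1r g1.
have gS0 := gnorm_ge0 g1 HMS'.
have gI0 := gnorm_ge0 g1 HMI.
have Sb := gnorm_bound g1 HMS'.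
have Ib := gnorm_bound g1 HMI.
set gS := seirs_gnorm t0 g (fun t => S t - 1) in gS0 hnorm Sb.
set gI := seirs_gnorm t0 g I in gI0 hnorm Ib.
have gSd : gS < A / Gm by exact: ar_splitl gI0 hnorm.
have gId : gI < A / Gm by exact: ar_splitr gS0 hnorm.
have gwinA : forall x, t0 - h1 - h2 <= x -> x <= t0 -> gI * g x < A /\ gS * g x < A.
  move=> x xl xu; have := gwin x xl xu; have := g1 x xu => gx1 gxm.
  have e2 : A / Gm * Gm = A by rewrite divfK // gt_eqF.
  split.
    apply: (le_lt_trans (y := gI * Gm)); first by rewrite ler_wpM2l.
    by rewrite -e2 ltr_pM2r.
  apply: (le_lt_trans (y := gS * Gm)); first by rewrite ler_wpM2l.
  by rewrite -e2 ltr_pM2r.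
have Snn : forall x, 0 <= S x.
  move=> x; have [xt|xt] := leP x t0; first exact: Shist.
  by have [] := Hbox x (ltW xt).
have Inn : forall x, 0 <= I x.
  move=> x; have [xt|xt] := leP x t0; first exact: Ihist.
  by have [_ [_ []]] := Hbox x (ltW xt).
have Sle1 : forall x, t0 <= x -> S x <= 1.
  move=> x xt; have [_ [Ex [Ix [Rx [_ Hs]]]]] := Hbox x xt.
  by move: Hs; rewrite Bmu; exact: ar_sum.
have Ihw : forall x, t0 - h1 - h2 <= x -> x <= t0 -> I x < A.
  move=> x xl xu; have [H _] := gwinA x xl xu.
  by apply: le_lt_trans H; apply: le_trans (Ib x xu); rewrite ler_norm.
have Shw : forall x, t0 - h1 - h2 <= x -> x <= t0 -> S x < 1 + A.
  move=> x xl xu; have [_ H] := gwinA x xl xu.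
  have := Sb x xu; rewrite /= ler_norml => /andP[_ HH]; exact: ar_a HH H.
have St0 : 1 - eta < S t0.
  have := Sb t0 (lexx t0); rewrite /= gt0eq mulr1 ler_norml => /andP[HH _].
  exact: ar_b HH gSd AGA A4.
have It0 : I t0 < A.
  have := Ib t0 (lexx t0); rewrite gt0eq mulr1 ger0_norm // => HH.
  exact: ar_c HH gId AGA.
have Ilt : forall x, t0 <= x -> I x < A.
  move=> x xt0; rewrite ltNge; apply/negP => Ax.
  have [s [ts sx Is Ibelow]] := first_cross cI It0 xt0 Ax.
  have Ile : forall y, t0 - h1 - h2 <= y -> y <= s -> I y <= A.
    move=> y yl ys; have [yt|yt] := leP y t0; first by apply/ltW/Ihw.
    have [ys'|ys'] := ltP y s; first by apply/ltW; apply: Ibelow => //; exact: ltW.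
    have -> : y = s by apply/eqP; rewrite eq_le ys ys'.
    by rewrite Is.
  have Sle : forall y, t0 - h1 - h2 <= y -> S y <= 1 + A.
    move=> y yl; have [yt|yt] := leP y t0; first by apply/ltW/Shw.
    exact: ar_le1A (Sle1 y (ltW yt)) A0.
  have [_ [_ [dI _]]] := Hder s ts.
  have hd : forall y, t0 <= y -> y < s -> I y < I s.
    by move=> y ty ys; rewrite Is; apply: Ibelow.
  have := deriv_left_ge0 ts dI hd.
  have FIb : seirs_force_I t0 h1 h2 mu muv f1 f2 G S I s <= (1 + A) * A * K * J.
    rewrite /seirs_force_I.
    apply: (le_trans (y := seirs_Lint `[t0, h2]
        (fun u => ((1 + A) * A * K) * (f2 u * expR (- (mu * u)))))).
      apply: Lint_mono.
        move=> u Du; have [tu uh] := memitv Du.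
        have f2u := f2p u Du.
        have eu0 := expR_ge0 (- (mu * u)).
        set inner := seirs_Lint _ _.
        have inn0 : 0 <= inner.
          apply: Lint_ge0 => z Dz; have [tz zh] := memitv Dz.
          by rewrite !mulr_ge0 ?expR_ge0 ?f1p //; case/andP: (Gle _ (Inn (s - z - u))).
        have innb : inner <= (A * expR (- (mu * u))) * K.
          rewrite Kdef -Lint_scale //; last 3 first.
          - exact: meas_fexp.
          - by move=> z Dz; rewrite mulr_ge0 ?expR_ge0 ?f1p.
          - by rewrite mulr_ge0 // ltW.
          apply: Lint_mono.
            move=> z Dz; have [tz zh] := memitv Dz.
            have f1z := f1p z Dz.
            have ez0 := expR_ge0 (- (muv * z)).
            have [Gp GI] := andP (Gle _ (Inn (s - z - u))).
            have [w1 w2] := ar_win3 ts t00 tz zh tu uh.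
            have IA : I (s - z - u) <= A by apply: Ile.
            rewrite expRD !mulr_ge0 //=.
            have -> : f1 z * (expR (- (muv * z)) * expR (- (mu * u))) * G (I (s - z - u))
                = (f1 z * expR (- (muv * z)) * expR (- (mu * u))) * G (I (s - z - u)) by ring.
            have -> : A * expR (- (mu * u)) * (f1 z * expR (- (muv * z)))
                = (f1 z * expR (- (muv * z)) * expR (- (mu * u))) * A by ring.
            by rewrite ler_wpM2l ?mulr_ge0 // (le_trans GI).
          apply: (int_fin_dens mD1 dens1 (C := A * expR (- (mu * u)))).
            by rewrite mulr_ge0 // ltW.
          move=> z Dz; have [tz zh] := memitv Dz.
          have f1z := f1p z Dz.
          rewrite !mulr_ge0 ?expR_ge0 ?(ltW A0) //=.
          rewrite ler_wpM2l ?mulr_ge0 ?(ltW A0) // ler_piMr //.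
          exact: e1' muv0 t00 tz.
        have Su : S (s - u) <= 1 + A by apply: Sle; exact: ar_win2 ts h10 uh.
        have Su0 := Snn (s - u).
        rewrite !mulr_ge0 //=.
        have -> : (1 + A) * A * K * (f2 u * expR (- (mu * u)))
            = f2 u * (1 + A) * (A * expR (- (mu * u)) * K) by ring.
        apply: ler_pM => //; first exact: mulr_ge0.
        by apply: ler_wpM2l.
      apply: (int_fin_dens mD2 dens2 (C := (1 + A) * A * K)).
        by rewrite !mulr_ge0 // ?(ltW A0) // addr_ge0 // ltW.
      move=> z Dz; have [tz zh] := memitv Dz.
      have f2z := f2p z Dz.
      have p : 0 <= (1 + A) * A * K by rewrite !mulr_ge0 // ?(ltW A0) // addr_ge0 // ltW.
      apply/andP; split; first by apply: mulr_ge0 => //; apply: mulr_ge0 => //; exact: expR_ge0.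
      apply: ler_wpM2l => //; rewrite ler_piMr //; exact: e1' mu0 t00 tz.
    have mh : measurable_fun `[t0, h2]%classic (fun u => f2 u * expR (- (mu * u))).
      exact: meas_fexp.
    have hh0 : forall z, `[t0, h2]%classic z -> 0 <= f2 z * expR (- (mu * z)).
      by move=> z Dz; rewrite mulr_ge0 ?expR_ge0 ?f2p.
    have C0 : 0 <= (1 + A) * A * K by rewrite !mulr_ge0 // ?(ltW A0) // addr_ge0 // ltW.
    by rewrite (Lint_scale mD2 mh hh0 C0) -Jdef.
  rewrite Is -cdef => H.
  have : beta * seirs_force_I t0 h1 h2 mu muv f1 f2 G S I s <= k * (1 + A) * A.
    rewrite kdef; apply: le_trans (_ : beta * ((1 + A) * A * K * J) <= _).
      by rewrite ler_wpM2l // ltW.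
    by rewrite le_eqVlt; apply/orP; left; apply/eqP; ring.
  move=> HX; exact: ar_I k0 A0 A1 HX H.
have Sgt : forall x, t0 <= x -> 1 - eta < S x.
  move=> x xt0; rewrite ltNge; apply/negP => Sx.
  have cNS : continuous (fun t => - S t) by move=> y; apply: cvgN; exact: cS.
  have hh0 : (fun t => - S t) t0 < - (1 - eta) by rewrite /= ltrN2.
  have hh1 : - (1 - eta) <= (fun t => - S t) x by rewrite /= lerN2.
  have [s [ts sx Ss Sbelow]] := first_cross cNS hh0 xt0 hh1.
  have Ss' : S s = 1 - eta by apply: oppr_inj; exact: Ss.
  have [dS _] := Hder s ts.
  have dNS := is_deriveN dS.
  have hd : forall y, t0 <= y -> y < s -> (- S) y < (- S) s.
    move=> y ty ys; have e : (- S) s = - (1 - eta) by exact: Ss.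
    rewrite e; exact: (Sbelow y ty ys).
  have := deriv_left_ge0 ts dNS hd.
  have FSb : 0 <= seirs_force_S t0 h1 muv f1 G I s <= A.
    apply/andP; split.
      apply: Lint_ge0 => z Dz; have [tz zh] := memitv Dz.
      by rewrite !mulr_ge0 ?expR_ge0 ?f1p //; case/andP: (Gle _ (Inn (s - z))).
    apply: (Lint_dens_le mD1 dens1 (ltW A0)) => z Dz.
    have [tz zh] := memitv Dz.
    have f1z := f1p z Dz.
    have [Gp GI] := andP (Gle _ (Inn (s - z))).
    have IA : I (s - z) <= A.
      have [st|st] := leP (s - z) t0; last by apply/ltW/Ilt/ltW.
      by apply/ltW/Ihw => //; exact: ar_win1 ts h20 zh.
    have ez : expR (- (muv * z)) <= 1 by exact: e1' muv0 t00 tz.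
    apply/andP; split; first by rewrite !mulr_ge0 ?expR_ge0.
    apply: (le_trans (y := f1 z * G (I (s - z)))).
      by apply: ler_wpM2r => //; rewrite ler_piMr.
    by rewrite mulrC; apply: ler_wpM2r => //; apply: le_trans IA.
  have Rec0 : 0 <= seirs_recov_term t0 mu f3 I s.
    apply: Lint_ge0 => z Dz.
    by rewrite !mulr_ge0 ?expR_ge0 ?f3p.
  case/andP: FSb => FS0 FSA.
  have X : beta * S s * seirs_force_S t0 h1 muv f1 G I s <= beta * A.
    rewrite -mulrA ler_wpM2l ?(ltW beta0) // Ss'.
    apply: le_trans FSA; rewrite ler_piMl //; exact: ar_d.
  have Y : 0 <= alpha * seirs_recov_term t0 mu f3 I s by rewrite mulr_ge0 // ltW.
  have me : 0 < mu * eta by rewrite mulr_gt0.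
  rewrite Bm Ss' => H; rewrite Ss' in X.
  exact: ar_S X Y A2 me A0 beta0 H.
have St := Sgt t tt0.
have It := Ilt t tt0.
have S1 := Sle1 t tt0.
rewrite ler0_norm ?subr_le0 // ger0_norm ?Inn // opprB.
exact: ar_fin St It etae A3 eps0.
Qed.
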